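(* Let $A\to M$, $B\to M$ be Lie algebroids, $(\nabla^{AB},\nabla^{AC},R_A)$ a 2-representation of $A$ on $\partial_B\colon C\to B$ and $(\nabla^{BA},\nabla^{BC},R_B)$ a 2-representation of $B$ on $\partial_A\colon C\to A$ forming a matched pair. Then $C$ is a Lie algebroid with anchor $\rho_C:=\rho_A\circ\partial_A=\rho_B\circ\partial_B$ and bracket $[c_1,c_2]=\nabla_{\partial_Ac_1}c_2-\nabla_{\partial_Bc_2}c_1$, and $\partial_A\colon C\to A$ and $\partial_B\colon C\to B$ are Lie algebroid morphisms.
   Context: A 2-representation of a Lie algebroid $A$ on a complex $\partial_B\colon C\to B$ is a triple $(\nabla^{AB},\nabla^{AC},R_A)$: $A$-connections on $B$ and $C$ with $\partial_B\circ\nabla^{AC}=\nabla^{AB}\circ\partial_B$, and $R_A\in\Omega^2(A,\mathrm{Hom}(B,C))$ with $R_{\nabla^{AC}}=R_A\circ\partial_B$, $R_{\nabla^{AB}}=\partial_B\circ R_A$, $\mathrm d_{\nabla^{\mathrm{Hom}}}R_A=0$. Similarly for $B$ on $\partial_A\colon C\to A$ with $R_B\in\Omega^2(B,\mathrm{Hom}(A,C))$. Writing $\nabla$ for all four connections, they form a matched pair if for all $a,a_i\in\Gamma(A)$, $b,b_i\in\Gamma(B)$, $c,c_i\in\Gamma(C)$: (M1) $\rho_A\partial_A=\rho_B\partial_B$; (M2) $\nabla_{\partial_Ac_1}c_2-\nabla_{\partial_Bc_2}c_1=-\nabla_{\partial_Ac_2}c_1+\nabla_{\partial_Bc_1}c_2$;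 (M3) $[a,\partial_Ac]=\partial_A(\nabla_ac)-\nabla_{\partial_Bc}a$; (M4) $[b,\partial_Bc]=\partial_B(\nabla_bc)-\nabla_{\partial_Ac}b$; (M5) $[\rho_A(a),\rho_B(b)]=\rho_B(\nabla_ab)-\rho_A(\nabla_ba)$; (M6) $\nabla_b\nabla_ac-\nabla_a\nabla_bc-\nabla_{\nabla_ba}c+\nabla_{\nabla_ab}c=R_B(b,\partial_Bc)a-R_A(a,\partial_Ac)b$; (M7) $\partial_A(R_A(a_1,a_2)b)=-\nabla_b[a_1,a_2]+[\nabla_ba_1,a_2]+[a_1,\nabla_ba_2]+\nabla_{\nabla_{a_2}b}a_1-\nabla_{\nabla_{a_1}b}a_2$; (M8) $\partial_B(R_B(b_1,b_2)a)=-\nabla_a[b_1,b_2]+[\nabla_ab_1,b_2]+[b_1,\nabla_ab_2]+\nabla_{\nabla_{b_2}a}b_1-\nabla_{\nabla_{b_1}a}b_2$; (M9) $\mathrm d_{\nabla^A}R_B=\mathrm d_{\nabla^B}R_A$, where $R_B$ is viewed in $\Omega^1(A,\wedge^2B^*\otimes C)$ via $a\mapsto((b_1,b_2)\mapsto R_B(b_1,b_2)a)$, $R_A$ in $\Omega^1(B,\wedge^2A^*\otimes C)$ likewise, $\nabla^A,\nabla^B$ the induced connections on $\wedge^2B^*\otimes C$, $\wedge^2A^*\otimes C$, and $\Omega^2(A,\wedge^2B^*\otimes C)\cong\Omega^2(B,\wedge^2A^*\otimes C)$ via $\omega(a_1,a_2)(b_1,b_2)=\omega'(b_1,b_2)(a_1,a_2)$.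 *)

(* Defs.v *)
(* Lie algebroids over a base M are modelled algebraically
   (Lie--Rinehart style): R plays the role of C^oo(M) (a commutative algebra
   over a characteristic-0 field k, standing for the reals), and the
   R-modules A, B, C play the role of the spaces of sections Γ(A), Γ(B), Γ(C).
   Vector fields are k-linear derivations of R. *)
From HB Require Import structures.
From mathcomp Require Import all_boot all_order all_algebra.
Set Implicit Arguments. Unset Strict Implicit. Unset Printing Implicit Defensive.
Import GRing.Theory Num.Theory.
Local Open Scope ring_scope.

Section LieAlgebroids.
Variables (k : numFieldType) (R : comAlgType k).

Definition is_derivation (D : R -> R) : Prop :=
  (forall (x : k) (f g : R), D (x *: f + g) = x *: D f + D g) /\
  (forall f g : R, D (f * g) = D f * g + f * D g).

Definition Rlinear (E F : lmodType R) (phi : E -> F) : Prop :=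
  forall (f : R) (e e' : E), phi (f *: e + e') = f *: phi e + phi e'.

Definition is_anchor (A : lmodType R) (rho : A -> R -> R) : Prop :=
  (forall a, is_derivation (rho a)) /\
  (forall (f : R) (a a' : A) (g : R), rho (f *: a + a') g = f * rho a g + rho a' g).

Definition lie_algebroid (A : lmodType R) (rho : A -> R -> R) (br : A -> A -> A)
  : Prop :=
  ((is_anchor rho) /\ (
      (forall (x : k) (a a' b : A), br ((x%:A : R) *: a + a') b
                                    = (x%:A : R) *: br a b + br a' b)) /\ ((forall (x : k) (a b b' : A), br a ((x%:A : R) *: b + b')
                                    = (x%:A : R) *: br a b + br a b')) /\ (
      (forall a : A, br a a = 0)) /\ (
      (forall a b c : A, br a (br b c) + br b (br c a) + br c (br a b) = 0)) /\ (
      (forall (a b : A) (f : R), br a (f *: b) = f *: br a b + rho a f *: b)) /\ (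
      (forall (a b : A) (f : R), rho (br a b) f = rho a (rho b f) - rho b (rho a f)))).

(* Lie algebroid morphism over the identity of M. *)
Definition lie_morphism (E F : lmodType R)
  (rhoE : E -> R -> R) (brE : E -> E -> E)
  (rhoF : F -> R -> R) (brF : F -> F -> F) (phi : E -> F) : Prop :=
  ((Rlinear phi) /\ ((forall (e : E) (f : R), rhoF (phi e) f = rhoE e f)) /\ ((forall e1 e2 : E, phi (brE e1 e2) = brF (phi e1) (phi e2)))).

Definition connection (A E : lmodType R) (rho : A -> R -> R) (nab : A -> E -> E)
  : Prop :=
  (((forall (f : R) (a a' : A) (e : E), nab (f *: a + a') e = f *: nab a e + nab a' e)) /\ ((forall (a : A) (e e' : E), nab a (e + e') = nab a e + nab a e')) /\ ((forall (a : A) (f : R) (e : E), nab a (f *: e) = f *: nab a e + rho a f *: e))).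

Definition curv (A E : lmodType R) (br : A -> A -> A) (nab : A -> E -> E)
  (a1 a2 : A) (e : E) : E :=
  nab a1 (nab a2 e) - nab a2 (nab a1 e) - nab (br a1 a2) e.

(* An element of Ω^2(A, Hom(B,C)): R-trilinear, alternating in A-arguments. *)
Definition hom_2form (A B C : lmodType R) (om : A -> A -> B -> C) : Prop :=
  (((forall (f : R) (a a' a2 : A) (b : B),
         om (f *: a + a') a2 b = f *: om a a2 b + om a' a2 b)) /\ ((forall (f : R) (a1 a a' : A) (b : B),
         om a1 (f *: a + a') b = f *: om a1 a b + om a1 a' b)) /\ ((forall (a1 a2 : A), Rlinear (om a1 a2))) /\ ((forall (a : A) (b : B), om a a b = 0))).

Definition nabla_hom (A B C : lmodType R) (nAB : A -> B -> B) (nAC : A -> C -> C)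
  (a : A) (phi : B -> C) (b : B) : C :=
  nAC a (phi b) - phi (nAB a b).

(* d_{nabla^Hom} om for om ∈ Ω^2(A, Hom(B,C)), evaluated at (a1,a2,a3) and b. *)
Definition d_hom2 (A B C : lmodType R) (br : A -> A -> A)
  (nAB : A -> B -> B) (nAC : A -> C -> C) (om : A -> A -> B -> C)
  (a1 a2 a3 : A) (b : B) : C :=
  nabla_hom nAB nAC a1 (om a2 a3) b - nabla_hom nAB nAC a2 (om a1 a3) b
  + nabla_hom nAB nAC a3 (om a1 a2) b
  - om (br a1 a2) a3 b + om (br a1 a3) a2 b - om (br a2 a3) a1 b.

Definition two_rep (A B C : lmodType R) (rho : A -> R -> R) (br : A -> A -> A)
  (dB : C -> B) (nAB : A -> B -> B) (nAC : A -> C -> C) (RA : A -> A -> B -> C)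
  : Prop :=
  ((Rlinear dB) /\ (connection rho nAB) /\ (connection rho nAC) /\ ((forall (a : A) (c : C), dB (nAC a c) = nAB a (dB c))) /\ (hom_2form RA) /\ ((forall (a1 a2 : A) (c : C), curv br nAC a1 a2 c = RA a1 a2 (dB c))) /\ ((forall (a1 a2 : A) (b : B), curv br nAB a1 a2 b = dB (RA a1 a2 b))) /\ ((forall (a1 a2 a3 : A) (b : B), d_hom2 br nAB nAC RA a1 a2 a3 b = 0))).

(* (d_{nabla^A} R_B)(a1,a2)(b1,b2), where R_B is viewed as a 1-form on A with
   values in ∧^2 B^* ⊗ C, a ↦ ((b1,b2) ↦ RB b1 b2 a), and nabla^A is the
   connection on ∧^2 B^* ⊗ C induced by nAB, nAC. *)
Definition d_mixed (A B C : lmodType R) (brA : A -> A -> A)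
  (nAB : A -> B -> B) (nAC : A -> C -> C) (RB : B -> B -> A -> C)
  (a1 a2 : A) (b1 b2 : B) : C :=
  (nAC a1 (RB b1 b2 a2) - RB (nAB a1 b1) b2 a2 - RB b1 (nAB a1 b2) a2)
  - (nAC a2 (RB b1 b2 a1) - RB (nAB a2 b1) b2 a1 - RB b1 (nAB a2 b2) a1)
  - RB b1 b2 (brA a1 a2).

Definition matched_pair (A B C : lmodType R)
  (rhoA : A -> R -> R) (brA : A -> A -> A) (rhoB : B -> R -> R) (brB : B -> B -> B)
  (dA : C -> A) (dB : C -> B)
  (nAB : A -> B -> B) (nAC : A -> C -> C) (RA : A -> A -> B -> C)
  (nBA : B -> A -> A) (nBC : B -> C -> C) (RB : B -> B -> A -> C) : Prop :=
  (( (forall (c : C) (f : R), rhoA (dA c) f = rhoB (dB c) f)) /\ ( (forall c1 c2 : C,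
         nAC (dA c1) c2 - nBC (dB c2) c1 = - nAC (dA c2) c1 + nBC (dB c1) c2)) /\ ( (forall (a : A) (c : C), brA a (dA c) = dA (nAC a c) - nBA (dB c) a)) /\ ( (forall (b : B) (c : C), brB b (dB c) = dB (nBC b c) - nAB (dA c) b)) /\ ( (forall (a : A) (b : B) (f : R),
         rhoA a (rhoB b f) - rhoB b (rhoA a f) = rhoB (nAB a b) f - rhoA (nBA b a) f)) /\ ( (forall (a : A) (b : B) (c : C),
         nBC b (nAC a c) - nAC a (nBC b c) - nAC (nBA b a) c + nBC (nAB a b) c
         = RB b (dB c) a - RA a (dA c) b)) /\ ( (forall (a1 a2 : A) (b : B),
         dA (RA a1 a2 b) = - nBA b (brA a1 a2) + brA (nBA b a1) a2 + brA a1 (nBA b a2)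
                           + nBA (nAB a2 b) a1 - nBA (nAB a1 b) a2)) /\ ( (forall (b1 b2 : B) (a : A),
         dB (RB b1 b2 a) = - nAB a (brB b1 b2) + brB (nAB a b1) b2 + brB b1 (nAB a b2)
                           + nAB (nBA b2 a) b1 - nAB (nBA b1 a) b2)) /\ ( (forall (a1 a2 : A) (b1 b2 : B),
         d_mixed brA nAB nAC RB a1 a2 b1 b2 = d_mixed brB nBA nBC RA b1 b2 a1 a2))).

Definition anchorC (A C : lmodType R) (rhoA : A -> R -> R) (dA : C -> A)
  (c : C) (f : R) : R := rhoA (dA c) f.

Definition bracketC (A B C : lmodType R) (dA : C -> A) (dB : C -> B)
  (nAC : A -> C -> C) (nBC : B -> C -> C) (c1 c2 : C) : C :=
  nAC (dA c1) c2 - nBC (dB c2) c1.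

End LieAlgebroids.

(* Main.v *)
Require Import Defs.
From HB Require Import structures.
From mathcomp Require Import all_boot all_order all_algebra.
Import GRing.Theory Num.Theory.
Local Open Scope ring_scope.

Inductive zexp : Type := ZA (n : nat) | ZP (a b : zexp) | ZN (a : zexp) | Z0.

Fixpoint zeval (V : zmodType) (env : seq V) (e : zexp) {struct e} : V :=
  match e with
  | ZA n => nth 0 env n
  | ZP a b => zeval V env a + zeval V env b
  | ZN a => - zeval V env a
  | Z0 => 0
  end.

Fixpoint zcoef (e : zexp) (i : nat) : int :=
  match e with
  | ZA n => if n == i then 1 else 0
  | ZP a b => zcoef a i + zcoef b i
  | ZN a => - zcoef a i
  | Z0 => 0
  end.

Fixpoint lsum (V : zmodType) (env : seq V) (f : nat -> int) {struct env} : V :=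
  match env with
  | [::] => 0
  | x :: env' => x *~ f 0%N + lsum V env' (fun i => f i.+1)
  end.

Fixpoint zchk (n : nat) (f g : nat -> int) : bool :=
  match n with
  | 0%N => true
  | n'.+1 => (f 0%N == g 0%N) && zchk n' (fun i => f i.+1) (fun i => g i.+1)
  end.

Lemma lsum_ext (V : zmodType) (env : seq V) f g : (forall i, f i = g i) -> lsum V env f = lsum V env g.
Proof. elim: env f g => [|x env IH] f g H //=. by rewrite H (IH _ (fun i => g i.+1)). Qed.

Lemma lsum0 (V : zmodType) (env : seq V) : lsum V env (fun _ => 0) = 0.
Proof. elim: env => [|x env IH] //=. by rewrite IH mulr0z addr0. Qed.

Lemma lsumD (V : zmodType) (env : seq V) f g :
  lsum V env (fun i => f i + g i) = lsum V env f + lsum V env g.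
Proof. elim: env f g => [|x env IH] f g /=; first by rewrite addr0.
by rewrite IH mulrzDr addrACA. Qed.

Lemma lsumN (V : zmodType) (env : seq V) f :
  lsum V env (fun i => - f i) = - lsum V env f.
Proof. elim: env f => [|x env IH] f /=; first by rewrite oppr0.
by rewrite IH mulrNz opprD. Qed.

Lemma lsum_atom (V : zmodType) (env : seq V) (n : nat) :
  nth 0 env n = lsum V env (fun i => if n == i then 1 else 0).
Proof.
elim: env n => [|x env IH] [|n] /=.
- by [].
- by [].
- by rewrite mulr1z (@lsum_ext _ _ _ (fun _ => 0)) ?lsum0 ?addr0.
- by rewrite mulr0z add0r (IH n); apply: lsum_ext.
Qed.

Lemma zeval_lsum (V : zmodType) (env : seq V) e : zeval V env e = lsum V env (zcoef e).
Proof.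
elim: e => [n|a IHa b IHb|a IHa|] /=.
- exact: lsum_atom.
- by rewrite IHa IHb -lsumD.
- by rewrite IHa -lsumN.
- by rewrite lsum0.
Qed.

Lemma zchk_lsum (V : zmodType) (env : seq V) f g : zchk (size env) f g -> lsum V env f = lsum V env g.
Proof.
elim: env f g => [|x env IH] f g //= /andP[/eqP -> H].
by rewrite (IH _ _ H).
Qed.

Lemma zeval_eq (V : zmodType) (env : seq V) e1 e2 :
  zchk (size env) (zcoef e1) (zcoef e2) -> zeval V env e1 = zeval V env e2.
Proof. by move=> H; rewrite !zeval_lsum; apply: zchk_lsum. Qed.

Ltac zeq x y := constr:(ltac:(tryif unify x y then exact true else exact false) : bool).
Ltac zinList x l := match l with
  | nil => false
  | cons ?y ?l' => let b := zeq x y in match b with true => true | false => zinList x l' end end.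
Ltac zadd x l := let b := zinList x l in match b with true => l | false => constr:(cons x l) end.
Ltac zcollect t l := match t with
  | (?a + ?b)%R => let l1 := zcollect a l in zcollect b l1
  | (- ?a)%R => zcollect a l
  | 0%R => l
  | _ => zadd t l end.
Ltac zlookup x l := match l with
  | cons ?y ?l' => let b := zeq x y in
      match b with true => constr:(0%N) | false => let n := zlookup x l' in constr:(S n) end end.
Ltac zreify t l := match t with
  | (?a + ?b)%R => let ea := zreify a l in let eb := zreify b l in constr:(ZP ea eb)
  | (- ?a)%R => let ea := zreify a l in constr:(ZN ea)
  | 0%R => constr:(Z0)
  | _ => let n := zlookup t l in constr:(ZA n) end.
Ltac zsolve := match goal with |- @eq ?T ?l ?r =>
  let env := zcollect l (@nil T) in let env := zcollect r env in
  let el := zreify l env in let er := zreify r env in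
  change (zeval _ env el = zeval _ env er); apply: zeval_eq; vm_compute; reflexivity end.


Lemma addf0 {U V : zmodType} {f : U -> V} :
  (forall x y, f (x + y) = f x + f y) -> f 0 = 0.
Proof.
move=> h. have e := congr1 (fun z => z - f 0) (h 0 0).
rewrite /= addr0 subrr addrK in e. by rewrite -e.
Qed.

Lemma addfN {U V : zmodType} {f : U -> V} :
  (forall x y, f (x + y) = f x + f y) -> forall x, f (- x) = - f x.
Proof.
move=> h x. have e := h x (- x). rewrite subrr (addf0 h) in e.
by apply/eqP; rewrite -addr_eq0 addrC -e.
Qed.

Lemma addfB {U V : zmodType} {f : U -> V} :
  (forall x y, f (x + y) = f x + f y) -> forall x y, f (x - y) = f x - f y.
Proof. by move=> h x y; rewrite h (addfN h). Qed.

Lemma der_const {k : numFieldType} {R : comAlgType k} {D : R -> R} :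
  is_derivation D -> forall x : k, D (x%:A) = 0.
Proof.
case=> hl hm x.
have hD : forall x y, D (x + y) = D x + D y.
  by move=> u v; have := hl 1 u v; rewrite !scale1r.
have D1 : D 1 = 0.
  have e := congr1 (fun z => z - D 1) (hm 1 1).
  rewrite /= !mulr1 !mul1r subrr addrK in e. by rewrite -e.
have := hl x 1 0. by rewrite addr0 D1 (addf0 hD) scaler0 addr0.
Qed.

Lemma twice0 {k : numFieldType} {R : comAlgType k} {V : lmodType R} (x : V) :
  x + x = 0 -> x = 0.
Proof.
move=> h.
have e : (((1 * (2%:R)^-1) : k)%:A : R) *: (x + x) = x.
  by rewrite scalerDr -scalerDl -scalerDl -splitr !scale1r.
by rewrite -e h scaler0.
Qed.

Lemma comb4 {V : zmodType} {L R l1 r1 l2 r2 l3 r3 l4 r4 : V} :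
  l1 = r1 -> l2 = r2 -> l3 = r3 -> l4 = r4 ->
  L - R = (l1 - r1) + (l2 - r2) - (l3 - r3) + (l4 - r4) -> L = R.
Proof.
move=> -> -> -> ->; rewrite !subrr subr0 !addr0 => /eqP.
by rewrite subr_eq0 => /eqP.
Qed.

Theorem mainTheorem2 (k : numFieldType) (R : comAlgType k) (A B C : lmodType R)
  (rhoA : A -> R -> R) (brA : A -> A -> A) (rhoB : B -> R -> R) (brB : B -> B -> B)
  (dA : C -> A) (dB : C -> B)
  (nAB : A -> B -> B) (nAC : A -> C -> C) (RA : A -> A -> B -> C)
  (nBA : B -> A -> A) (nBC : B -> C -> C) (RB : B -> B -> A -> C) :
  lie_algebroid rhoA brA ->
  lie_algebroid rhoB brB ->
  two_rep rhoA brA dB nAB nAC RA ->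
  two_rep rhoB brB dA nBA nBC RB ->
  matched_pair rhoA brA rhoB brB dA dB nAB nAC RA nBA nBC RB ->
  [/\ lie_algebroid (anchorC rhoA dA) (bracketC dA dB nAC nBC),
      (forall (c : C) (f : R), anchorC rhoA dA c f = rhoB (dB c) f),
      lie_morphism (anchorC rhoA dA) (bracketC dA dB nAC nBC) rhoA brA dA &
      lie_morphism (anchorC rhoA dA) (bracketC dA dB nAC nBC) rhoB brB dB].
Proof.
move=> LA LB TA TB MP.
case: LA => [[derA linA] [bilA1 [bilA2 [altA [jacA [leibA morA]]]]]].
case: LB => [[derB linB] [bilB1 [bilB2 [altB [jacB [leibB morB]]]]]].
case: TA => [dBlin [cAB [[cAC1 [cAC2 cAC3]] [dBc [homRA [curvAC [curvAB dRA]]]]]]].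
case: TB => [dAlin [cBA [[cBC1 [cBC2 cBC3]] [dAc [homRB [curvBC [curvBA dRB]]]]]]].
case: MP => [M1 [M2 [M3 [M4 [M5 [M6 [M7 [M8 M9]]]]]]]].
have dAD : forall x y, dA (x + y) = dA x + dA y.
  by move=> x y; have := dAlin 1 x y; rewrite !scale1r.
have dBD : forall x y, dB (x + y) = dB x + dB y.
  by move=> x y; have := dBlin 1 x y; rewrite !scale1r.
have dAB := addfB dAD. have dBB := addfB dBD.
have dAZ : forall f x, dA (f *: x) = f *: dA x.
  by move=> f x; have := dAlin f x 0; rewrite addr0 (addf0 dAD) addr0.
have dBZ : forall f x, dB (f *: x) = f *: dB x.
  by move=> f x; have := dBlin f x 0; rewrite addr0 (addf0 dBD) addr0.
have nACl : forall c a a', nAC (a + a') c = nAC a c + nAC a' c.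
  by move=> c a a'; have := cAC1 1 a a' c; rewrite !scale1r.
have nBCl : forall c b b', nBC (b + b') c = nBC b c + nBC b' c.
  by move=> c b b'; have := cBC1 1 b b' c; rewrite !scale1r.
have nACB1 : forall c a a', nAC (a - a') c = nAC a c - nAC a' c.
  by move=> c; apply: (addfB (f := fun a => nAC a c)); apply: nACl.
have nBCB1 : forall c b b', nBC (b - b') c = nBC b c - nBC b' c.
  by move=> c; apply: (addfB (f := fun b => nBC b c)); apply: nBCl.
have nBCN1 : forall c b, nBC (- b) c = - nBC b c.
  by move=> c; apply: (addfN (f := fun b => nBC b c)); apply: nBCl.
have nACB2 : forall a, forall x y, nAC a (x - y) = nAC a x - nAC a y.
  by move=> a; apply: addfB; apply: cAC2.
have nBCB2 : forall b, forall x y, nBC b (x - y) = nBC b x - nBC b y.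
  by move=> b; apply: addfB; apply: cBC2.
have nACZ : forall f a c, nAC (f *: a) c = f *: nAC a c.
  move=> f a c; have := cAC1 f a 0 c.
  by rewrite addr0 (addf0 (f := fun a => nAC a c)) ?addr0 // => x y; apply: nACl.
have nBCZ : forall f b c, nBC (f *: b) c = f *: nBC b c.
  move=> f b c; have := cBC1 f b 0 c.
  by rewrite addr0 (addf0 (f := fun b => nBC b c)) ?addr0 // => x y; apply: nBCl.
have brBl : forall x y z, brB (x + y) z = brB x z + brB y z.
  by move=> x y z; have := bilB1 1 x y z; rewrite !scale1r.
have brBr : forall x y z, brB z (x + y) = brB z x + brB z y.
  by move=> x y z; have := bilB2 1 z x y; rewrite !scale1r.
have brBN : forall x y, brB x y = - brB y x.
  move=> x y; have := altB (x + y); rewrite brBl !brBr !altB add0r addr0 => e.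
  by apply/eqP; rewrite -addr_eq0 e.
have brE : forall c c', bracketC dA dB nAC nBC c c' = nAC (dA c) c' - nBC (dB c') c by [].
have dA_br : forall c1 c2, dA (bracketC dA dB nAC nBC c1 c2) = brA (dA c1) (dA c2).
  by move=> c1 c2; rewrite brE dAB dAc M3.
have dB_br : forall c1 c2, dB (bracketC dA dB nAC nBC c1 c2) = brB (dB c1) (dB c2).
  by move=> c1 c2; rewrite brE dBB dBc brBN M4 opprB.
have bil1 : forall (x : k) (a a' b : C), bracketC dA dB nAC nBC ((x%:A : R) *: a + a') b
      = (x%:A : R) *: bracketC dA dB nAC nBC a b + bracketC dA dB nAC nBC a' b.
  move=> x a a' b; rewrite !brE dAlin cAC1 cBC2 cBC3 (der_const (derB _)) scale0r addr0 scalerBr.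
  zsolve.
have bil2 : forall (x : k) (a b b' : C), bracketC dA dB nAC nBC a ((x%:A : R) *: b + b')
      = (x%:A : R) *: bracketC dA dB nAC nBC a b + bracketC dA dB nAC nBC a b'.
  move=> x a b b'; rewrite !brE dBlin cBC1 cAC2 cAC3 (der_const (derA _)) scale0r addr0 scalerBr.
  zsolve.
have brCl : forall x y z, bracketC dA dB nAC nBC (x + y) z
      = bracketC dA dB nAC nBC x z + bracketC dA dB nAC nBC y z.
  by move=> x y z; have := bil1 1 x y z; rewrite !scale1r.
have brCr : forall x y z, bracketC dA dB nAC nBC z (x + y)
      = bracketC dA dB nAC nBC z x + bracketC dA dB nAC nBC z y.
  by move=> x y z; have := bil2 1 z x y; rewrite !scale1r.
have brCrN : forall z x, bracketC dA dB nAC nBC z (- x) = - bracketC dA dB nAC nBC z x.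
  by move=> z; apply: addfN => x y; apply: brCr.
have altC : forall c, bracketC dA dB nAC nBC c c = 0.
  move=> c; apply: twice0; rewrite !brE.
  have h := M2 c c. rewrite {1}h. zsolve.
have brCN : forall x y, bracketC dA dB nAC nBC x y = - bracketC dA dB nAC nBC y x.
  move=> x y; have := altC (x + y); rewrite brCl !brCr !altC add0r addr0 => e.
  by apply/eqP; rewrite -addr_eq0 e.
have LJ : forall c1 c2 c3, bracketC dA dB nAC nBC c1 (bracketC dA dB nAC nBC c2 c3)
    = bracketC dA dB nAC nBC (bracketC dA dB nAC nBC c1 c2) c3
      - bracketC dA dB nAC nBC (bracketC dA dB nAC nBC c1 c3) c2.
  move=> c1 c2 c3.
  have h6 := M6 (dA c1) (dB c3) c2.
  rewrite -dAc -dBc in h6.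
  have hA := curvAC (dA c1) (dA c2) c3.
  rewrite /curv -(dA_br c1 c2) (brE c1 c2) dAB nACB1 in hA.
  have hB := curvBC (dB c3) (dB c2) c1.
  rewrite /curv (brBN (dB c3)) nBCN1 in hB.
  have h2 := M2 c2 (nAC (dA c1) c3).
  rewrite (brE c1 (bracketC dA dB nAC nBC c2 c3)) (dB_br c2 c3) !brE.
  rewrite !nACB2 !nBCB2 !dAB !nACB1.
  refine (comb4 hA h6 hB h2 _). zsolve.
have jacC : forall a b c, bracketC dA dB nAC nBC a (bracketC dA dB nAC nBC b c)
    + bracketC dA dB nAC nBC b (bracketC dA dB nAC nBC c a)
    + bracketC dA dB nAC nBC c (bracketC dA dB nAC nBC a b) = 0.
  move=> a b c.
  rewrite (LJ a b c) (brCN (bracketC dA dB nAC nBC a b) c)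
    (brCN (bracketC dA dB nAC nBC a c) b) (brCN a c) brCrN.
  zsolve.
split.
- refine (conj _ (conj bil1 (conj bil2 (conj altC (conj jacC (conj _ _)))))).
  + split.
    * by move=> a; exact: derA.
    * by move=> f a a' g; rewrite /anchorC dAlin linA.
  + move=> a b f; rewrite !brE /anchorC cAC3 dBZ nBCZ scalerBr.
    zsolve.
  + by move=> a b f; rewrite /anchorC dA_br morA.
- by move=> c f; rewrite /anchorC M1.
- refine (conj dAlin (conj _ dA_br)). by [].
- refine (conj dBlin (conj _ dB_br)). by move=> e f; rewrite /anchorC M1.

Qed.
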